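(* There is no cubic graph $G$ with a proper $5$-edge-coloring $c$ such that $|N_G(c)|=1$.
   Context: Graphs are finite, undirected, loopless, and may contain parallel edges. A proper $5$-edge-coloring of $G$ is a map $c:E(G)\to\{1,\dots,5\}$ with adjacent edges receiving different colors. For such $c$ and a vertex $v$, $S_c(v)$ is the set of colors on edges incident to $v$. An edge $uv$ of a cubic graph is poor if $|S_c(u)\cup S_c(v)|=3$, rich if $|S_c(u)\cup S_c(v)|=5$, and abnormal if it is neither poor nor rich. $N_G(c)$ denotes the set of abnormal edges of $G$ with respect to $c$. *)

(* Defs.v *)
From mathcomp Require Import all_boot.
Set Implicit Arguments. Unset Strict Implicit. Unset Printing Implicit Defensive.

(* Parallel
   edges are allowed since distinct edges may have the same endpoints. *)
Record multigraph := Multigraph {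
  vtx : finType;
  edg : finType;
  end1 : edg -> vtx;
  end2 : edg -> vtx;
  loopless : forall e, end1 e != end2 e
}.

Section Defs.
Variable G : multigraph.

Definition incident (v : vtx G) (e : edg G) : bool :=
  (end1 e == v) || (end2 e == v).

Definition inc_edges (v : vtx G) : {set edg G} := [set e | incident v e].

Definition cubic : Prop := forall v : vtx G, #|inc_edges v| = 3.

Definition adjacent_edges (e f : edg G) : bool :=
  (e != f) && [exists v, incident v e && incident v f].

(* proper 5-edge-coloring, colors {1..5} represented by 'I_5 *)
Definition proper5 (c : edg G -> 'I_5) : Prop :=
  forall e f, adjacent_edges e f -> c e != c f.

Definition Sc (c : edg G -> 'I_5) (v : vtx G) : {set 'I_5} :=
  [set c e | e in inc_edges v].

Definition edge_colset (c : edg G -> 'I_5) (e : edg G) : {set 'I_5} :=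
  Sc c (end1 e) :|: Sc c (end2 e).

Definition poor (c : edg G -> 'I_5) (e : edg G) : bool := #|edge_colset c e| == 3.
Definition rich (c : edg G -> 'I_5) (e : edg G) : bool := #|edge_colset c e| == 5.
Definition abnormal (c : edg G -> 'I_5) (e : edg G) : bool :=
  ~~ poor c e && ~~ rich c e.

Definition abnormal_edges (c : edg G -> 'I_5) : {set edg G} :=
  [set e | abnormal c e].
End Defs.

(* Main.v *)
Require Import Defs.
From mathcomp Require Import all_boot.
From mathcomp Require Import zify.

Set Implicit Arguments. Unset Strict Implicit. Unset Printing Implicit Defensive.

Lemma inc_uniq (G : multigraph) (c : edg G -> 'I_5) (pr : proper5 c) v e f :
  incident v e -> incident v f -> c e = c f -> e = f.
Proof.
move=> ve vf cef; apply/eqP; apply: contraT => nef.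
have : adjacent_edges e f by rewrite /adjacent_edges nef; apply/existsP; exists v; rewrite ve vf.
by move/pr; rewrite cef eqxx.
Qed.

Lemma card_Sc (G : multigraph) (c : edg G -> 'I_5) (cub : cubic G) (pr : proper5 c) v :
  #|Sc c v| = 3.
Proof.
rewrite /Sc card_in_imset; first exact: cub.
by move=> e f; rewrite /inc_edges !inE => ve vf; exact: (inc_uniq pr ve vf).
Qed.

Lemma x_in_Sc (G : multigraph) (c : edg G -> 'I_5) v e : incident v e -> c e \in Sc c v.
Proof. by move=> ve; apply/imsetP; exists e; rewrite ?inE. Qed.

Lemma sum_pick (G : multigraph) (Q : pred (vtx G)) a : \sum_(v | Q v) (a == v : nat) = Q a.
Proof.
rewrite big_mkcond (bigD1 a) //= eqxx big1 ?addn0; first by case: (Q a).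
by move=> v /negbTE; rewrite eq_sym => ->; case: (Q v).
Qed.

Lemma parity (G : multigraph) (c : edg G -> 'I_5) (pr : proper5 c) (x : 'I_5)
  (Q : pred (vtx G)) (HQ : forall v, Q v -> x \in Sc c v) :
  odd #|[set v | Q v]| = odd #|[set e | (c e == x) && (Q (end1 e) != Q (end2 e))]|.
Proof.
have E1 : #|[set v | Q v]| = \sum_(e | c e == x) (Q (end1 e) + Q (end2 e)).
  transitivity (\sum_(v | Q v) \sum_(e | c e == x) (incident v e : nat)).
    rewrite -sum1_card; apply: eq_big => [v|v Qv]; first by rewrite inE.
    rewrite inE in Qv.
    have /imsetP [e0 He0 ce0] := HQ v Qv.
    rewrite inE in He0.
    rewrite (bigD1 e0) /=; last by rewrite ce0.
    rewrite He0 big1 // => f /andP [cf nf].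
    case vf: (incident v f) => //.
    by move: nf; rewrite (inc_uniq pr vf He0) ?eqxx // (eqP cf) ce0.
  rewrite exchange_big /=; apply: eq_bigr => e _.
  have H : forall v, ((end1 e == v) || (end2 e == v) : nat) = (end1 e == v) + (end2 e == v).
    move=> v; case: eqP => [<-|] //=.
    by rewrite eq_sym (negbTE (loopless e)).
  by rewrite (eq_bigr _ (fun v _ => H v)) big_split /= !sum_pick.
have E2 : forall e, Q (end1 e) + Q (end2 e) =
   (Q (end1 e) != Q (end2 e)) + 2 * (Q (end1 e) && Q (end2 e)).
  by move=> e; case: (Q (end1 e)); case: (Q (end2 e)).
rewrite E1 (eq_bigr _ (fun e _ => E2 e)) big_split /= -big_distrr /= oddD oddM /= addbF.
rewrite -sum1_card; congr odd; rewrite big_mkcond [RHS]big_mkcond /=; apply: eq_bigr => e _.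
by rewrite inE; case: (c e == x); case: (_ != _).
Qed.

Definition QT (G : multigraph) (c : edg G -> 'I_5) (x : 'I_5) (T : {set 'I_5}) (v : vtx G) : bool :=
  (Sc c v == T) || (Sc c v == x |: ~: T).

Definition N (G : multigraph) (c : edg G -> 'I_5) (T : {set 'I_5}) :=
  #|[set v : vtx G | Sc c v == T]|.

Lemma rich_comp (U W : {set 'I_5}) x : #|U| = 3 -> #|W| = 3 -> x \in U -> x \in W ->
  #|U :|: W| = 5 -> W = x |: ~: U.
Proof.
move=> cU cW xU xW cUW.
have cI : #|U :&: W| = 1 by have := cardsUI U W; rewrite cU cW cUW; lia.
have /cards1P [y Hy] : #|U :&: W| == 1 by rewrite cI.
have I1 : U :&: W = [set x].
  have xI : x \in U :&: W by rewrite inE xU xW.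
  by move: xI; rewrite Hy inE => /eqP ->.
apply/eqP; rewrite eqEcard; apply/andP; split.
  apply/subsetP => z zW; rewrite !inE.
  case zU: (z \in U) => /=; last by rewrite orbT.
  have : z \in U :&: W by rewrite inE zU zW.
  by rewrite I1 inE => ->.
by rewrite cardsU1 inE xU /= cardsCs setCK card_ord cU cW.
Qed.

Lemma compK (x : 'I_5) (T : {set 'I_5}) : x \in T -> x |: ~: (x |: ~: T) = T.
Proof.
move=> xT; apply/setP => y; rewrite !inE.
by case: eqP => [->|_] /=; rewrite ?xT // negbK.
Qed.

Lemma Qsym (U W T : {set 'I_5}) x : x \in T -> U = x |: ~: W -> W = x |: ~: U ->
  (W == T) || (W == x |: ~: T) -> (U == T) || (U == x |: ~: T).
Proof.
move=> xT hU hW /orP [/eqP|/eqP] h; rewrite hU h ?(compK xT) ?eqxx ?orbT //.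
Qed.

Lemma QT_normal (G : multigraph) (c : edg G -> 'I_5) (cub : cubic G) (pr : proper5 c)
  e (x : 'I_5) (T : {set 'I_5}) (cx : c e = x) (xT : x \in T) (nab : ~~ abnormal c e) :
  QT c x T (end1 e) = QT c x T (end2 e).
Proof.
have cU := card_Sc cub pr (end1 e).
have cW := card_Sc cub pr (end2 e).
have xU : x \in Sc c (end1 e) by rewrite -cx x_in_Sc // /incident eqxx.
have xW : x \in Sc c (end2 e) by rewrite -cx x_in_Sc // /incident eqxx orbT.
rewrite /abnormal negb_and !negbK /poor /rich /edge_colset in nab.
move: nab cU cW xU xW.
set U := Sc c (end1 e); set W := Sc c (end2 e).
move=> nab cU cW xU xW.
rewrite /QT -/U -/W.
case/orP: nab => /eqP h.
  have hU : U = U :|: W by apply/eqP; rewrite eqEcard subsetUl h cU.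
  have hW : W = U :|: W by apply/eqP; rewrite eqEcard subsetUr h cW.
  by rewrite -hW in hU; rewrite hU.
have hW := rich_comp cU cW xU xW h.
have hU : U = x |: ~: W by apply: rich_comp; rewrite // setUC.
by apply/idP/idP; apply: Qsym.
Qed.

Lemma card_QT (G : multigraph) (c : edg G -> 'I_5) (x : 'I_5) (T : {set 'I_5}) : 1 < #|T| -> x \in T ->
  #|[set v | QT c x T v]| = N c T + N c (x |: ~: T).
Proof.
move=> cT xT.
have neq : T != x |: ~: T.
  apply/eqP => h.
  have /card_gt0P [y Hy] : 0 < #|T :\ x|.
    by have := cardsD1 x T; rewrite xT /= => hh; move: hh cT; move: #|T| #|T :\ x| => n m; lia.
  move: Hy; rewrite !inE => /andP [yx yT].
  by move: (yT); rewrite {1}h !inE yT (negbTE yx).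
rewrite /N -cardsUI.
have -> : [set v | Sc c v == T] :&: [set v | Sc c v == x |: ~: T] = set0.
  apply/setP => v; rewrite !inE.
  apply/negP => /andP [/eqP h1 /eqP h2].
  by move: neq; rewrite -{1}h1 h2 eqxx.
rewrite cards0 addn0; apply: eq_card => v; rewrite !inE.
by [].
Qed.

Lemma inst (G : multigraph) (c : edg G -> 'I_5) (cub : cubic G) (pr : proper5 c) e0
  (abE : forall e, abnormal c e -> e = e0) (x : 'I_5) (T : {set 'I_5}) (xT : x \in T) (cT : 1 < #|T|) :
  odd (N c T + N c (x |: ~: T)) = (c e0 == x) && (QT c x T (end1 e0) != QT c x T (end2 e0)).
Proof.
rewrite -card_QT // (@parity _ _ pr x); last first.
  by move=> v /orP [/eqP ->|/eqP ->] //; rewrite setU11.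
set S := [set e | _].
have -> : (c e0 == x) && (QT c x T (end1 e0) != QT c x T (end2 e0)) = (e0 \in S)
  by rewrite /S inE.
have sub : S \subset [set e0].
  apply/subsetP => e; rewrite /S !inE => /andP [/eqP ce hQ].
  apply/eqP/abE; apply/negPn/negP => nab.
  by move: hQ; rewrite (QT_normal cub pr ce xT nab) eqxx.
move: sub; rewrite subset1 => /orP [/eqP ->|/eqP ->].
  by rewrite cards1 inE eqxx.
by rewrite cards0 inE.
Qed.

Theorem mainTheorem6 :
  ~ exists (G : multigraph) (c : edg G -> 'I_5),
      [/\ cubic G, proper5 c & #|abnormal_edges c| = 1].
Proof.
move=> [G [c [cub pr h1]]].
have /cards1P [e0 He0] : #|abnormal_edges c| == 1 by rewrite h1.
have ab0 : abnormal c e0.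
  have : e0 \in abnormal_edges c by rewrite He0 inE.
  by rewrite inE.
have abE : forall e, abnormal c e -> e = e0.
  move=> e abe; have : e \in abnormal_edges c by rewrite inE.
  by rewrite He0 inE => /eqP.
have cU := card_Sc cub pr (end1 e0).
have cW := card_Sc cub pr (end2 e0).
have aU : c e0 \in Sc c (end1 e0) by rewrite x_in_Sc // /incident eqxx.
have aW : c e0 \in Sc c (end2 e0) by rewrite x_in_Sc // /incident eqxx orbT.
have I := inst cub pr abE.
move: ab0; rewrite /abnormal /poor /rich /edge_colset.
move: cU cW aU aW I.
set U := Sc c (end1 e0); set W := Sc c (end2 e0); set a := c e0.
move=> cU cW aU aW I /andP [/eqP n3 /eqP n5].
have le5 : #|U :|: W| <= 5 by have := max_card (mem (U :|: W)); rewrite card_ord.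
have ge3 : #|U| <= #|U :|: W| by rewrite subset_leq_card // subsetUl.
have cUW : #|U :|: W| = 4 by move: n3 n5 le5 ge3 cU; move: #|U :|: W| #|U| => n m; lia.
have cI : #|U :&: W| = 2 by have := cardsUI U W; rewrite cU cW cUW; move: #|U :&: W| => n; lia.
have /cards1P [xc Hc] : #|U :\: W| == 1 by rewrite cardsD cI cU.
have /cards1P [xd Hd] : #|W :\: U| == 1 by rewrite cardsD setIC cI cW.
have /cards1P [xb Hb] : #|(U :&: W) :\ a| == 1.
  by have := cardsD1 a (U :&: W); rewrite inE aU aW cI /=; move: #|(U :&: W) :\ a| => n; lia.
have /cards1P [xe He] : #|~: (U :|: W)| == 1.
  by have := cardsC (U :|: W); rewrite card_ord cUW; move: #|~: (U :|: W)| => n; lia.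
have fc y : (y == xc) = (y \notin W) && (y \in U) by rewrite -in_set1 -Hc inE.
have fd y : (y == xd) = (y \notin U) && (y \in W) by rewrite -in_set1 -Hd inE.
have fb y : (y == xb) = (y != a) && ((y \in U) && (y \in W)) by rewrite -in_set1 -Hb !inE.
have fe y : (y == xe) = ~~ ((y \in U) || (y \in W)) by rewrite -in_set1 -He !inE.
have X : xc |: ~: U = xd |: ~: W.
  apply/setP => y; rewrite !inE fc fd.
  by case: (y \in U); case: (y \in W).
have Y : xb |: ~: W = xe |: ~: (a |: ~: U).
  apply/setP => y; rewrite !inE fb fe.
  case: (eqVneq y a) => [->|_]; first by rewrite aU aW.
  by case: (y \in U); case: (y \in W).
have := fc xc; rewrite eqxx => /esym/andP [xcW xcU].
have := fd xd; rewrite eqxx => /esym/andP [xdU xdW].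
have := fb xb; rewrite eqxx => /esym/andP [xba /andP [xbU xbW]].
have := fe xe; rewrite eqxx => /esym; rewrite negb_or => /andP [xeU xeW].
have c3 : 1 < #|U| by rewrite cU.
have c3' : 1 < #|W| by rewrite cW.
have cA : 1 < #|a |: ~: U|.
  by rewrite cardsU1 !inE aU /= cardsCs setCK card_ord cU.
have xeA : xe \in a |: ~: U by rewrite !inE xeU orbT.
have I1 := I _ _ aU c3.
have I2 := I _ _ xcU c3.
have I3 := I _ _ xdW c3'.
have I4 := I _ _ xbW c3'.
have I5 := I _ _ xeA cA.
rewrite -/a eqxx /QT -/U -/W eqxx /= in I1.
have WU : (W == U) = false.
  apply/negbTE/eqP => h; move: cUW; rewrite h setUid cU //.
have WA : (W == a |: ~: U) = false.
  apply/negbTE/eqP => h; move: cUW.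
  by rewrite h setUCA setUCr setUT cardsT card_ord.
rewrite WU WA /= in I1.
have nac : (a == xc) = false by apply/negbTE/eqP => h; move: xcW; rewrite -h aW.
have nad : (a == xd) = false by apply/negbTE/eqP => h; move: xdU; rewrite -h aU.
have nab : (a == xb) = false by apply/negbTE/eqP => h; move: xba; rewrite h eqxx.
have nae : (a == xe) = false by apply/negbTE/eqP => h; move: xeU; rewrite -h aU.
rewrite -/a nac in I2; rewrite -/a nad in I3; rewrite -/a nab in I4; rewrite -/a nae in I5.
rewrite X in I2; rewrite Y in I4.
rewrite !oddD in I1 I2 I3 I4 I5.
move: I1 I2 I3 I4 I5.
case: (odd (N c U)); case: (odd (N c W)); case: (odd (N c (a |: ~: U)));
  case: (odd (N c (xd |: ~: W))); case: (odd (N c (xe |: ~: (a |: ~: U)))) => //.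
Qed.
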